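(* A TDLC-group $G$ is compact (i.e. profinite) if and only if $G$ is compactly generated and satisfies the weak $0$-dimensional linear isoperimetric inequality.
   Context: A TDLC-group is a totally disconnected locally compact Hausdorff topological group. A discrete $\mathbb{Q}[G]$-module is a left $\mathbb{Q}[G]$-module in which every element has open stabilizer. A $G$-set $\Omega$ is proper if all point stabilizers are compact open; $\mathbb{Q}[\Omega]$ is then a proper permutation module, finitely generated iff $\Omega/G$ is finite, with $\ell_1$-norm $\|\sum a_\omega\omega\|_1=\sum|a_\omega|$. A compactly generated TDLC-group admits an exact sequence $\mathbb{Q}[\Omega_1]\xrightarrow{\delta_1}\mathbb{Q}[\Omega_0]\xrightarrow{\delta_0}\mathbb{Q}\to0$ of discrete modules with $\Omega_0,\Omega_1$ proper $G$-sets with finitely many orbits (type $\mathrm{FP}_1$; e.g. the augmented cellular chain complex of a Cayley–Abels graph). $G$ satisfies the weak $0$-dimensional linear isoperimetric inequality if for some (equivalently any) such sequence there is $C>0$ with $\inf\{\|y\|_1: y\in\mathbb{Q}[\Omega_1],\ \delta_1(y)=x\}\le C\|x\|_1$ for all $x\in\ker\delta_0$. *)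

(* Defs.v *)
From HB Require Import structures.
From mathcomp Require Import all_boot all_order all_algebra.
From Stdlib Require Import ClassicalEpsilon.
Set Implicit Arguments. Unset Strict Implicit. Unset Printing Implicit Defensive.
Import Order.TTheory GRing.Theory Num.Theory.
Local Open Scope ring_scope.

Record TopGroup := {
  tg_car :> Type;
  tg_mul : tg_car -> tg_car -> tg_car;
  tg_inv : tg_car -> tg_car;
  tg_one : tg_car;
  tg_mulA : forall x y z, tg_mul x (tg_mul y z) = tg_mul (tg_mul x y) z;
  tg_mul1g : forall x, tg_mul tg_one x = x;
  tg_mulg1 : forall x, tg_mul x tg_one = x;
  tg_mulVg : forall x, tg_mul (tg_inv x) x = tg_one;
  tg_mulgV : forall x, tg_mul x (tg_inv x) = tg_one;
  tg_open : (tg_car -> Prop) -> Prop;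
  tg_open_setT : tg_open (fun _ => True);
  tg_open_union : forall F : (tg_car -> Prop) -> Prop,
      (forall U, F U -> tg_open U) -> tg_open (fun x => exists U, F U /\ U x);
  tg_open_inter : forall U V, tg_open U -> tg_open V ->
      tg_open (fun x => U x /\ V x);
  (* continuity of multiplication G x G -> G (product topology) *)
  tg_mul_cont : forall U x y, tg_open U -> U (tg_mul x y) ->
      exists V W, [/\ tg_open V, tg_open W, V x, W y &
                     forall a b, V a -> W b -> U (tg_mul a b)];
  tg_inv_cont : forall U, tg_open U -> tg_open (fun x => U (tg_inv x))
}.

Section TopDefs.
Variable G : TopGroup.

Definition compact_set (K : G -> Prop) : Prop :=
  forall F : (G -> Prop) -> Prop,
    (forall U, F U -> @tg_open G U) ->
    (forall x, K x -> exists U, F U /\ U x) ->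
    exists s : list (G -> Prop),
      (forall U, List.In U s -> F U) /\
      (forall x, K x -> exists U, List.In U s /\ U x).

Definition hausdorff : Prop :=
  forall x y : G, x <> y -> exists U V, [/\ @tg_open G U, @tg_open G V, U x, V y &
                                       forall z, U z -> V z -> False].

Definition locally_compact : Prop :=
  forall x : G, exists U K, [/\ @tg_open G U, compact_set K, U x &
                                forall z, U z -> K z].

Definition connected_set (S : G -> Prop) : Prop :=
  forall U V, @tg_open G U -> @tg_open G V ->
    (forall x, S x -> U x \/ V x) ->
    (exists x, S x /\ U x) -> (exists x, S x /\ V x) ->
    exists x, [/\ S x, U x & V x].

Definition totally_disconnected : Prop :=
  forall S, connected_set S -> forall x y, S x -> S y -> x = y.

Definition TDLC : Prop := [/\ hausdorff, locally_compact & totally_disconnected].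

Definition compact_group : Prop := compact_set (fun _ => True).

Definition gprod (l : list G) : G := List.fold_right (@tg_mul G) (tg_one G) l.

Definition generates (K : G -> Prop) : Prop :=
  forall g : G, exists l : list G,
    (forall h, List.In h l -> K h \/ K (@tg_inv G h)) /\ g = gprod l.

Definition compactly_generated : Prop :=
  exists K, compact_set K /\ generates K.

Definition is_action (Om : Type) (act : G -> Om -> Om) : Prop :=
  (forall w, act (tg_one G) w = w) /\
  (forall g h w, act (@tg_mul G g h) w = act g (act h w)).

Definition stabilizer (Om : Type) (act : G -> Om -> Om) (w : Om) : G -> Prop :=
  fun g => act g w = w.

Definition proper_Gset (Om : Type) (act : G -> Om -> Om) : Prop :=
  is_action act /\
  forall w, @tg_open G (stabilizer act w) /\ compact_set (stabilizer act w).

Definition finitely_many_orbits (Om : Type) (act : G -> Om -> Om) : Prop :=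
  exists s : list Om, forall w, exists v g, List.In v s /\ act g v = w.

End TopDefs.

(** * Permutation modules Q[Om] : finitely supported functions Om -> rat *)
Section PermMod.
Variable Om : eqType.

Definition finsupp (f : Om -> rat) : Prop :=
  exists s : seq Om, forall w, f w != 0 -> w \in s.

Definition supp_seq (f : Om -> rat) : seq Om :=
  match excluded_middle_informative (finsupp f) with
  | left H => proj1_sig (constructive_indefinite_description _ H)
  | right _ => [::]
  end.

Definition l1norm (f : Om -> rat) : rat :=
  \sum_(w <- undup (supp_seq f)) `|f w|.

End PermMod.

Section Modules.
Variable G : TopGroup.

(** action of G on Q[Om]:  (g . f)(w) = f(g^-1 . w), i.e. g . (sum a_w w) = sum a_w (g w) *)
Definition pmod_act (Om : Type) (act : G -> Om -> Om) (g : G) (f : Om -> rat) : Om -> rat :=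
  fun w => f (act (@tg_inv G g) w).

Definition pmod_hom (Om1 Om0 : eqType) (act1 : G -> Om1 -> Om1) (act0 : G -> Om0 -> Om0)
    (d : (Om1 -> rat) -> (Om0 -> rat)) : Prop :=
  [/\ forall y, finsupp y -> finsupp (d y),
      forall y z, finsupp y -> finsupp z ->
        forall w, d (fun v => y v + z v) w = d y w + d z w,
      forall (a : rat) y, finsupp y -> forall w, d (fun v => a * y v) w = a * d y w &
      forall g y, finsupp y -> forall w, d (pmod_act act1 g y) w = pmod_act act0 g (d y) w].

Definition aug_hom (Om0 : eqType) (act0 : G -> Om0 -> Om0) (d : (Om0 -> rat) -> rat) : Prop :=
  [/\ forall y z, finsupp y -> finsupp z -> d (fun v => y v + z v) = d y + d z,
      forall (a : rat) y, finsupp y -> d (fun v => a * y v) = a * d y &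
      forall g y, finsupp y -> d (pmod_act act0 g y) = d y].

Definition exact_FP1 (Om1 Om0 : eqType) (d1 : (Om1 -> rat) -> (Om0 -> rat))
    (d0 : (Om0 -> rat) -> rat) : Prop :=
  [/\ forall q : rat, exists x, finsupp x /\ d0 x = q,
      forall y, finsupp y -> d0 (d1 y) = 0 &
      forall x, finsupp x -> d0 x = 0 ->
        exists y, finsupp y /\ forall w, d1 y w = x w].

Definition FP1_resolution (Om1 Om0 : eqType) (act1 : G -> Om1 -> Om1)
    (act0 : G -> Om0 -> Om0) (d1 : (Om1 -> rat) -> (Om0 -> rat))
    (d0 : (Om0 -> rat) -> rat) : Prop :=
  [/\ proper_Gset act1 /\ finitely_many_orbits act1,
      proper_Gset act0 /\ finitely_many_orbits act0,
      pmod_hom act1 act0 d1, aug_hom act0 d0 & exact_FP1 d1 d0].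

(** weak 0-dimensional linear isoperimetric inequality (for some such sequence):
    inf { ||y||_1 : d1 y = x } <= C ||x||_1 for all x in ker d0. *)
Definition weak_lin_isoperimetric : Prop :=
  exists (Om1 Om0 : eqType) (act1 : G -> Om1 -> Om1) (act0 : G -> Om0 -> Om0)
         (d1 : (Om1 -> rat) -> (Om0 -> rat)) (d0 : (Om0 -> rat) -> rat),
    FP1_resolution act1 act0 d1 d0 /\
    exists C : rat, 0 < C /\
      forall x, finsupp x -> d0 x = 0 ->
        forall eps : rat, 0 < eps ->
          exists y, [/\ finsupp y, (forall w, d1 y w = x w) &
                        l1norm y <= C * l1norm x + eps].

End Modules.

(* Main.v *)
Require Import Defs.
From mathcomp Require Import all_boot all_order all_algebra.
From Stdlib Require Import ClassicalEpsilon FunctionalExtensionality PropExtensionality Classical.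
From Stdlib Require List.
Set Implicit Arguments. Unset Strict Implicit. Unset Printing Implicit Defensive.
Import Order.TTheory GRing.Theory Num.Theory.
Local Open Scope ring_scope.
From mathcomp Require Import lra.

Definition delta (Om : eqType) (u : Om) : Om -> rat := fun w => if w == u then 1 else 0.

Definition supp_in (Om : eqType) (f : Om -> rat) (s : seq Om) := forall w, f w != 0 -> w \in s.

Lemma supp_seqP (Om : eqType) (f : Om -> rat) : finsupp f -> supp_in f (supp_seq f).
Proof.
move=> H; rewrite /supp_seq; case: excluded_middle_informative => // H'.
by case: (constructive_indefinite_description _ H').
Qed.

Lemma supp_undup (Om : eqType) (f : Om -> rat) : finsupp f -> supp_in f (undup (supp_seq f)).
Proof. by move=> H w /(supp_seqP H); rewrite mem_undup. Qed.

Lemma finsuppP (Om : eqType) (f : Om -> rat) s : supp_in f s -> finsupp f.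
Proof. by exists s. Qed.

Lemma supp_delta (Om : eqType) (u : Om) : supp_in (delta u) [:: u].
Proof. by move=> w; rewrite /delta; case: (w =P u) => [->|]; rewrite ?mem_seq1 ?eqxx. Qed.

Lemma finsupp_delta (Om : eqType) (u : Om) : finsupp (delta u).
Proof. by exists [:: u]; apply: supp_delta. Qed.

Lemma finsupp0 (Om : eqType) : finsupp (fun _ : Om => 0).
Proof. by exists [::] => w; rewrite eqxx. Qed.

Lemma finsupp_scale (Om : eqType) (a : rat) (f : Om -> rat) : finsupp f -> finsupp (fun v => a * f v).
Proof.
case=> s Hs; exists s => w; rewrite mulf_eq0 negb_or => /andP[_]; exact: Hs.
Qed.

Lemma finsupp_add (Om : eqType) (f g : Om -> rat) : finsupp f -> finsupp g -> finsupp (fun v => f v + g v).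
Proof.
case=> s Hs [t Ht]; exists (s ++ t) => w H; rewrite mem_cat.
case: (f w =P 0) => [E|/eqP E]; last by rewrite Hs.
by move: H; rewrite E add0r => /Ht ->; rewrite orbT.
Qed.

Definition linear_on (Om : eqType) (L : (Om -> rat) -> rat) :=
  (forall y z, finsupp y -> finsupp z -> L (fun v => y v + z v) = L y + L z) /\
  (forall (a : rat) y, finsupp y -> L (fun v => a * y v) = a * L y).

Lemma lin0 (Om : eqType) (L : (Om -> rat) -> rat) : linear_on L -> L (fun _ => 0) = 0.
Proof.
case=> _ Hs; have E := Hs 0 _ (finsupp0 Om).
have E2 : (fun v : Om => 0 * 0) = (fun _ => 0 : rat).
  by apply: functional_extensionality => v; rewrite mul0r.
by rewrite E2 mul0r in E.
Qed.

Lemma decomp (Om : eqType) (L : (Om -> rat) -> rat) : linear_on L ->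
  forall s f, uniq s -> supp_in f s -> L f = \sum_(u <- s) f u * L (delta u).
Proof.
move=> HL; elim=> [|u s IH] f Hu Hf.
  rewrite big_nil; have -> : f = (fun _ => 0).
    apply: functional_extensionality => w; apply/eqP; apply: contraT => /Hf.
    by rewrite in_nil.
  exact: lin0.
move: Hu => /= /andP[us Hu].
pose f' := fun w => if w == u then 0 else f w.
have sf' : supp_in f' s.
  move=> w; rewrite /f'; case: ifP => [_|ne]; first by rewrite eqxx.
  by move/Hf; rewrite in_cons ne.
have Ef : f = (fun w => f' w + f u * delta u w).
  apply: functional_extensionality => w; rewrite /f' /delta.
  case: (w =P u) => [->|/eqP ne]; first by rewrite mulr1 add0r.
  by rewrite mulr0 addr0.
case: HL => Ha Hs.
rewrite {1}Ef Ha; last first.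
- by apply: finsupp_scale; apply: finsupp_delta.
- exact: finsuppP sf'.
rewrite Hs; last exact: finsupp_delta.
rewrite big_cons addrC (IH f' Hu sf'); congr (_ + _).
apply: eq_big_seq => x xs; rewrite /f'; case: (x =P u) => [ex|//].
by rewrite -ex xs in us.
Qed.

Lemma gmulK (G : TopGroup) (k x : G) : tg_mul k (tg_mul (tg_inv k) x) = x.
Proof. by rewrite tg_mulA tg_mulgV tg_mul1g. Qed.

Lemma gmulKV (G : TopGroup) (k x : G) : tg_mul (tg_inv k) (tg_mul k x) = x.
Proof. by rewrite tg_mulA tg_mulVg tg_mul1g. Qed.

Lemma actK (G : TopGroup) (Om : Type) (act : G -> Om -> Om) g w :
  is_action act -> act g (act (tg_inv g) w) = w.
Proof. by case=> H1 HM; rewrite -HM tg_mulgV H1. Qed.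

Lemma actKV (G : TopGroup) (Om : Type) (act : G -> Om -> Om) g w :
  is_action act -> act (tg_inv g) (act g w) = w.
Proof. by case=> H1 HM; rewrite -HM tg_mulVg H1. Qed.

Lemma open_transl (G : TopGroup) (U : G -> Prop) (a : G) :
  tg_open U -> tg_open (fun x => U (tg_mul a x)).
Proof.
move=> HU.
pose F := fun W : G -> Prop => tg_open W /\ forall b, W b -> U (tg_mul a b).
have -> : (fun x => U (tg_mul a x)) = (fun x => exists W, F W /\ W x).
  apply: functional_extensionality => x; apply: propositional_extensionality; split.
    move=> Hx; have [V [W [oV oW Va Wx HVW]]] := tg_mul_cont HU Hx.
    exists W; split=> //; split=> // b Wb; exact: HVW.
  by case=> W [[_ HW] Wx]; apply: HW.
by apply: tg_open_union => W [].
Qed.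

Lemma compact_ext (G : TopGroup) (K K' : G -> Prop) :
  compact_set K -> (forall x, K' x <-> K x) -> compact_set K'.
Proof.
move=> HK E F oF cov; have [|s [Hs1 Hs2]] := HK F oF.
  by move=> x /E; apply: cov.
by exists s; split=> // x /E; apply: Hs2.
Qed.

Lemma list_choice (A B : Type) (R : A -> B -> Prop) (l : list A) :
  (forall a, List.In a l -> exists b, R a b) ->
  exists l' : list B, (forall a, List.In a l -> exists b, List.In b l' /\ R a b) /\
                      (forall b, List.In b l' -> exists a, List.In a l /\ R a b).
Proof.
elim: l => [|a l IH] H.
  by exists nil; split=> ? [].
have [b Hb] := H a (or_introl erefl).
have [l' [H1 H2]] := IH (fun a' h => H a' (or_intror h)).
exists (b :: l'); split.
  move=> a' [<-|h]; first by exists b; split=> //; left.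
  by have [b' [? ?]] := H1 a' h; exists b'; split=> //; right.
move=> b' [<-|h]; first by exists a; split=> //; left.
by have [a' [? ?]] := H2 b' h; exists a'; split=> //; right.
Qed.

Lemma compact_transl (G : TopGroup) (K : G -> Prop) (b : G) :
  compact_set K -> compact_set (fun x => K (tg_mul b x)).
Proof.
move=> HK F oF cov.
pose F' := fun V : G -> Prop => exists U, F U /\ V = (fun z => U (tg_mul (tg_inv b) z)).
have oF' : forall V, F' V -> tg_open V.
  by move=> V [U [FU ->]]; apply: open_transl; apply: oF.
have cov' : forall z, K z -> exists V, F' V /\ V z.
  move=> z Kz; have : K (tg_mul b (tg_mul (tg_inv b) z)) by rewrite gmulK.
  move/cov => [U [FU HU]].
  by exists (fun z => U (tg_mul (tg_inv b) z)); split=> //; exists U.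
have [s [Hs1 Hs2]] := HK F' oF' cov'.
have [l' [H1 H2]] := @list_choice _ _ (fun V U => F U /\ V = (fun z => U (tg_mul (tg_inv b) z))) s
  (fun V h => Hs1 V h).
exists l'; split.
  by move=> U /H2 [V [_ []]].
move=> x Kx; have [V [sV Vx]] := Hs2 _ Kx.
have [U [l'U [_ EV]]] := H1 V sV.
by exists U; split=> //; move: Vx; rewrite EV gmulKV.
Qed.

Lemma compact_fin_union (G : TopGroup) (Ks : list (G -> Prop)) :
  (forall K, List.In K Ks -> compact_set K) ->
  compact_set (fun x => exists K, List.In K Ks /\ K x).
Proof.
move=> HK F oF cov.
have [l' [H1 H2]] := @list_choice _ _ (fun K (s : list (G -> Prop)) =>
    (forall U, List.In U s -> F U) /\ (forall x, K x -> exists U, List.In U s /\ U x)) Ks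
  (fun K h => HK K h F oF (fun x Kx => cov x (ex_intro _ K (conj h Kx)))).
exists (List.concat l'); split.
  move=> U /List.in_concat [s [ls Us]].
  by have [K [_ [HF _]]] := H2 s ls; apply: HF.
move=> x [K [iK Kx]]; have [s [ls [_ Hc]]] := H1 K iK.
have [U [Us Ux]] := Hc x Kx.
by exists U; split=> //; apply/List.in_concat; exists s.
Qed.

Lemma fin_union (A T : Type) (l : list A) (P : A -> T -> Prop) :
  (forall a, List.In a l -> exists L, forall t, P a t -> List.In t L) ->
  exists L, forall a t, List.In a l -> P a t -> List.In t L.
Proof.
move=> H.
have [l' [H1 _]] := @list_choice _ _ (fun a L => forall t, P a t -> List.In t L) l H.
exists (List.concat l') => a t la Pt.
have [L [lL HL]] := H1 a la.
by apply/List.in_concat; exists L; split=> //; apply: HL.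
Qed.

Lemma orbit_fin (G : TopGroup) (Om : Type) (act : G -> Om -> Om) (K : G -> Prop) (b : Om) :
  is_action act -> compact_set K -> tg_open (stabilizer act b) ->
  exists L, forall k, K k -> List.In (act k b) L.
Proof.
move=> Hact HK Ho.
pose F := fun U : G -> Prop => exists k, K k /\ U = (fun x => stabilizer act b (tg_mul (tg_inv k) x)).
have oF : forall U, F U -> tg_open U.
  by move=> U [k [_ ->]]; apply: open_transl.
have cov : forall k, K k -> exists U, F U /\ U k.
  move=> k Kk; exists (fun x => stabilizer act b (tg_mul (tg_inv k) x)); split.
    by exists k.
  by rewrite /stabilizer tg_mulVg; case: Hact.
have [s [Hs1 Hs2]] := HK F oF cov.
have Hc : forall U, List.In U s -> exists p, forall x, U x -> act x b = p.
  move=> U /Hs1 [k [_ ->]]; exists (act k b) => x; rewrite /stabilizer => Hx.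
  by rewrite -{1}(gmulK k x); case: (Hact) => _ ->; rewrite Hx.
have [L [H1 _]] := @list_choice _ _ (fun U p => forall x, U x -> act x b = p) s Hc.
exists L => k Kk; have [U [sU Uk]] := Hs2 k Kk.
by have [p [Lp Hp]] := H1 U sU; rewrite (Hp k Uk).
Qed.

Lemma compact_of_orbit_fin (G : TopGroup) (Om : Type) (act : G -> Om -> Om) (w0 : Om) (P : list Om) :
  is_action act -> compact_set (stabilizer act w0) -> (forall g, List.In (act g w0) P) ->
  compact_group G.
Proof.
move=> Hact HK HP.
have Hc : forall p, List.In p P -> exists K : G -> Prop, compact_set K /\ forall x, act x w0 = p -> K x.
  move=> p _; case: (classic (exists g, act g w0 = p)) => [[g Hg]|Hn].
    exists (fun x => stabilizer act w0 (tg_mul (tg_inv g) x)); split.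
      exact: compact_transl.
    move=> x Hx; rewrite /stabilizer; case: (Hact) => _ ->; rewrite Hx -Hg.
    exact: actKV.
  exists (fun _ => False); split; last by move=> x Hx; apply: Hn; exists x.
  by move=> F _ _; exists nil; split=> // ? [].
have [Ks [H1 H2]] := @list_choice _ _ (fun p K => compact_set K /\ forall x, act x w0 = p -> K x) P Hc.
apply: (compact_ext (compact_fin_union (Ks := Ks) _)).
  by move=> K /H2 [p [_ []]].
move=> x; split=> // _.
have [K [iK [_ HK']]] := H1 _ (HP x).
by exists K; split=> //; apply: HK'.
Qed.

Definition mask (Om : Type) (D : Om -> Prop) (f : Om -> rat) : Om -> rat :=
  fun w => if excluded_middle_informative (D w) then 0 else f w.

Lemma mask_supp (Om : eqType) (D : Om -> Prop) f s : supp_in f s -> supp_in (mask D f) s.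
Proof.
move=> H w; rewrite /mask; case: excluded_middle_informative => [?|?]; last exact: H.
by rewrite eqxx.
Qed.

Lemma finsupp_mask (Om : eqType) (D : Om -> Prop) f : finsupp f -> finsupp (mask D f).
Proof. by case=> s Hs; exists s; apply: mask_supp. Qed.

Lemma lin_mask (Om : eqType) (L : (Om -> rat) -> rat) (D : Om -> Prop) :
  linear_on L -> linear_on (fun f => L (mask D f)).
Proof.
case=> Ha Hs; split.
  move=> y z fy fz; rewrite -Ha; try exact: finsupp_mask.
  congr L; apply: functional_extensionality => w; rewrite /mask.
  by case: excluded_middle_informative => [?|?] //; rewrite addr0.
move=> a y fy; rewrite -Hs; last exact: finsupp_mask.
congr L; apply: functional_extensionality => w; rewrite /mask.
by case: excluded_middle_informative => [?|?] //; rewrite mulr0.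
Qed.

Lemma lin_sum (Om : eqType) (N : nat) (L : nat -> (Om -> rat) -> rat) :
  (forall k, linear_on (L k)) -> linear_on (fun f => \sum_(k < N) L k f).
Proof.
move=> HL; split.
  move=> y z fy fz; rewrite -big_split /=; apply: eq_bigr => k _.
  by case: (HL k) => Ha _; rewrite Ha.
move=> a y fy; rewrite mulr_sumr; apply: eq_bigr => k _.
by case: (HL k) => _ Hs; rewrite Hs.
Qed.

Lemma lin_comp (Om1 Om0 : eqType) (d1 : (Om1 -> rat) -> (Om0 -> rat)) (L : (Om0 -> rat) -> rat) :
  (forall y, finsupp y -> finsupp (d1 y)) ->
  (forall y z, finsupp y -> finsupp z -> forall w, d1 (fun v => y v + z v) w = d1 y w + d1 z w) ->
  (forall (a : rat) y, finsupp y -> forall w, d1 (fun v => a * y v) w = a * d1 y w) ->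
  linear_on L -> linear_on (fun y => L (d1 y)).
Proof.
move=> Hf Ha Hs [La Ls]; split.
  move=> y z fy fz.
  have -> : d1 (fun v => y v + z v) = (fun w => d1 y w + d1 z w).
    by apply: functional_extensionality => w; apply: Ha.
  by rewrite La //; apply: Hf.
move=> a y fy.
have -> : d1 (fun v => a * y v) = (fun w => a * d1 y w).
  by apply: functional_extensionality => w; apply: Hs.
by rewrite Ls //; apply: Hf.
Qed.

Lemma mask_bound (Om : eqType) (L : (Om -> rat) -> rat) (D : Om -> Prop) f s :
  linear_on L -> uniq s -> supp_in f s ->
  `|L (mask D f)| <= \sum_(u <- s) `|f u| * `|L (delta u)|.
Proof.
move=> HL us Hf; rewrite (decomp HL us (mask_supp (D := D) Hf)).
apply: le_trans (ler_norm_sum _ _ _) _; apply: ler_sum => u _.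
rewrite normrM ler_wpM2r //; rewrite /mask.
by case: excluded_middle_informative => [?|?] //; rewrite normr0.
Qed.

Lemma pmod_mask (G : TopGroup) (Om : eqType) (act : G -> Om -> Om) (D : Om -> Prop) h f :
  is_action act ->
  mask D (pmod_act act h f) = pmod_act act h (mask (fun w => D (act h w)) f).
Proof.
move=> Hact; apply: functional_extensionality => w; rewrite /mask /pmod_act.
by rewrite (actK _ _ Hact).
Qed.

Lemma finsupp_pmod (G : TopGroup) (Om : eqType) (act : G -> Om -> Om) h f :
  is_action act -> finsupp f -> finsupp (pmod_act act h f).
Proof.
move=> Hact [s Hs]; exists (map (act h) s) => w /Hs H.
by apply/mapP; exists (act (tg_inv h) w) => //; rewrite actK.
Qed.

Lemma delta_act (G : TopGroup) (Om : eqType) (act : G -> Om -> Om) h v :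
  is_action act -> delta (act h v) = pmod_act act h (delta v).
Proof.
move=> Hact; apply: functional_extensionality => w; rewrite /delta /pmod_act.
case: (w =P act h v) => [->|ne]; first by rewrite actKV // eqxx.
case: (act (tg_inv h) w =P v) => // E; case: ne; by rewrite -E actK.
Qed.

Lemma one_nonzero (a : nat -> rat) (W : rat) (N : nat) :
  0 <= W -> (forall k, `|a k| <= W) ->
  (forall k k', (k < k')%N -> a k = 0 \/ a k' = 0) ->
  `|\sum_(k < N) a k| <= W.
Proof.
move=> W0 Hb Hp; elim: N => [|N IH]; first by rewrite big_ord0 normr0.
rewrite big_ord_recr /=.
case: (a N =P 0) => [->|ne]; first by rewrite addr0.
rewrite big1 ?add0r // => k _.
by case: (Hp k N (ltn_ord k)).
Qed.

Lemma In_mem (T : eqType) (x : T) s : x \in s -> List.In x s.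
Proof. elim: s => //= y s IH; rewrite in_cons => /orP[/eqP ->|/IH]; [by left|by right]. Qed.

Fixpoint ball (Om : Type) (adj : Om -> Om -> Prop) (w0 : Om) (n : nat) : Om -> Prop :=
  match n with
  | 0 => fun u => u = w0
  | n'.+1 => fun u => ball adj w0 n' u \/ exists u', ball adj w0 n' u' /\ adj u' u
  end.

Lemma ball_mono (Om : Type) (adj : Om -> Om -> Prop) w0 m n u :
  (m <= n)%N -> ball adj w0 m u -> ball adj w0 n u.
Proof.
elim: n => [|n IH]; first by rewrite leqn0 => /eqP ->.
rewrite leq_eqVlt => /orP[/eqP -> //|]; rewrite ltnS => /IH h /h hb /=; by left.
Qed.

Lemma ball_fin (Om : Type) (adj : Om -> Om -> Prop) w0 :
  (forall u, exists L, forall u', adj u u' -> List.In u' L) ->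
  forall n, exists L, forall u, ball adj w0 n u -> List.In u L.
Proof.
move=> Hl; elim=> [|n [L HL]]; first by exists (w0 :: nil) => u ->; left.
have [L' HL'] := fin_union (P := adj) (l := L) (fun a _ => Hl a).
exists (L ++ L') => u [/HL h|[u' [/HL h1 h2]]]; apply: List.in_or_app; first by left.
by right; apply: HL' h1 h2.
Qed.

Lemma le_sum_In (T : Type) (f : T -> rat) (l : list T) x :
  (forall y, 0 <= f y) -> List.In x l -> f x <= \sum_(y <- l) f y.
Proof.
move=> H0; elim: l => //= y l IH [->|h]; rewrite big_cons.
  by rewrite lerDl; apply: sumr_ge0.
by apply: le_trans (IH h) _; rewrite lerDr.
Qed.

Lemma sum_delta_le1 (Om : eqType) (a : Om) s : uniq s -> \sum_(w <- s) delta a w <= 1.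
Proof.
elim: s => [|y s IH] /=; first by rewrite big_nil.
move=> /andP[ys us]; rewrite big_cons /delta.
case: (y =P a) => [Ey|_]; last by rewrite add0r; apply: IH.
rewrite big1_seq ?addr0 // => w /andP[_ ws].
by case: (w =P a) => // Ew; move: ys; rewrite Ey -Ew ws.
Qed.

Lemma delta_ge0 (Om : eqType) (a w : Om) : 0 <= delta a w.
Proof. by rewrite /delta; case: (w == a). Qed.

Lemma l1_two (Om : eqType) (a b : Om) : l1norm (fun w => delta a w + (-1) * delta b w) <= 2.
Proof.
rewrite /l1norm; set s := undup _; have us : uniq s by apply: undup_uniq.
have H : \sum_(w <- s) `|delta a w + (-1) * delta b w| <= \sum_(w <- s) (delta a w + delta b w).
  apply: ler_sum => w _; apply: le_trans (ler_normD _ _) _.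
  by rewrite normrM normrN1 mul1r !ger0_norm ?delta_ge0.
apply: le_trans H _; rewrite big_split /=.
have h1 := sum_delta_le1 a us; have h2 := sum_delta_le1 b us.
by apply: le_trans (lerD h1 h2) _; rewrite (_ : 1 + 1 = 2).
Qed.

Lemma hard_dir (G : TopGroup) (Om1 Om0 : eqType) (act1 : G -> Om1 -> Om1) (act0 : G -> Om0 -> Om0)
    (d1 : (Om1 -> rat) -> (Om0 -> rat)) (d0 : (Om0 -> rat) -> rat) (C : rat) :
  FP1_resolution act1 act0 d1 d0 -> 0 < C ->
  (forall x, finsupp x -> d0 x = 0 -> forall eps : rat, 0 < eps ->
     exists y, [/\ finsupp y, (forall w, d1 y w = x w) & l1norm y <= C * l1norm x + eps]) ->
  compact_group G.
Proof.
case=> [[[Hact1 Hst1] [reps Hreps]] [[Hact0 Hst0] _] [Hd1f Hd1a Hd1s Hd1e] [Hd0a Hd0s Hd0e]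
  [Hsurj Hcomp Hex]] C0 Hiso.
apply: NNPP => Hnc.
have Ld0 : linear_on d0 by split.
pose F := fun v => d1 (delta v).
have fF : forall v, finsupp (F v) := fun v => Hd1f _ (finsupp_delta v).
have F_act : forall h v, F (act1 h v) = pmod_act act0 h (F v).
  move=> h v; rewrite /F (delta_act _ _ Hact1); apply: functional_extensionality => w.
  by rewrite Hd1e //; apply: finsupp_delta.
have d0F : forall v, d0 (F v) = 0 by move=> v; apply: Hcomp; apply: finsupp_delta.
have [w0 c0] : exists w0, d0 (delta w0) != 0.
  apply: NNPP => Hn.
  have [x [fx dx]] := Hsurj 1.
  have : d0 x = 0.
    rewrite (decomp Ld0 (undup_uniq _) (supp_undup fx)) big1 // => u _.
    have : ~~ (d0 (delta u) != 0) by apply/negP => h; apply: Hn; exists u.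
    by rewrite negbK => /eqP ->; rewrite mulr0.
  by rewrite dx => /eqP; rewrite oner_eq0.
set c := d0 (delta w0) in c0.
pose adj := fun u u' => exists v, F v u != 0 /\ F v u' != 0.
have Hloc : forall u, exists L, forall u', adj u u' -> List.In u' L.
  move=> u.
  pose S := fun vi => undup (supp_seq (F vi)).
  pose P3 := fun (vi : Om1) (a b t : Om0) => exists h, act0 h a = u /\ t = act0 h b.
  have H3 : forall vi a b, exists L, forall t, P3 vi a b t -> List.In t L.
    move=> vi a b; case: (classic (exists h0, act0 h0 a = u)) => [[h0 Hh0]|Hn]; last first.
      by exists nil => t [h [Hh _]]; case: Hn; exists h.
    have [Hoa Hca] := Hst0 a; have [Hob _] := Hst0 b.
    have [L0 HL0] := orbit_fin Hact0 Hca Hob.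
    exists (List.map (act0 h0) L0) => t [h [Hh ->]].
    have Hk : stabilizer act0 a (tg_mul (tg_inv h0) h).
      rewrite /stabilizer; case: (Hact0) => _ ->; rewrite Hh -Hh0; exact: actKV.
    have := HL0 _ Hk; move/(List.in_map (act0 h0)).
    by case: (Hact0) => _ <-; rewrite gmulK.
  have H2 : forall vi a, exists L, forall t, (exists b, List.In b (S vi) /\ P3 vi a b t) -> List.In t L.
    move=> vi a; have [L HL] := fin_union (l := S vi) (P := P3 vi a) (fun b _ => H3 vi a b).
    by exists L => t [b [ib Pt]]; apply: HL ib Pt.
  have H1 : forall vi, exists L, forall t,
      (exists a b, List.In a (S vi) /\ List.In b (S vi) /\ P3 vi a b t) -> List.In t L.
    move=> vi; have [L HL] := fin_union (l := S vi)
      (P := fun a t => exists b, List.In b (S vi) /\ P3 vi a b t) (fun a _ => H2 vi a).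
    by exists L => t [a [b [ia [ib Pt]]]]; apply: HL ia _; exists b.
  have [L HL] := fin_union (l := reps)
    (P := fun vi t => exists a b, List.In a (S vi) /\ List.In b (S vi) /\ P3 vi a b t)
    (fun vi _ => H1 vi).
  exists L => u' [v [Fu Fu']].
  have [vi [h [ri Ev]]] := Hreps v.
  move: Fu Fu'; rewrite -Ev F_act /pmod_act => Fu Fu'.
  apply: (HL vi) => //; exists (act0 (tg_inv h) u), (act0 (tg_inv h) u'); split; [|split].
  - by apply: In_mem; apply: (supp_undup (fF vi)).
  - by apply: In_mem; apply: (supp_undup (fF vi)).
  - by exists h; split; rewrite actK.
pose B := ball adj w0.
have Hfar : forall n, exists g, ~ B n (act0 g w0).
  move=> n; apply: NNPP => Hn.
  have [L HL] := ball_fin w0 Hloc n.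
  apply: Hnc; apply: (compact_of_orbit_fin (w0 := w0) (P := L) Hact0).
    by case: (Hst0 w0).
  move=> g; apply: HL; apply: NNPP => h; apply: Hn; by exists g.
pose Wi := fun vi => \sum_(u <- undup (supp_seq (F vi))) `|F vi u| * `|d0 (delta u)|.
pose W := \sum_(vi <- reps) Wi vi.
have Wi0 : forall vi, 0 <= Wi vi by move=> vi; apply: sumr_ge0 => u _; apply: mulr_ge0.
have W0 : 0 <= W by apply: sumr_ge0.
have Tbound : forall D v, `|d0 (mask D (F v))| <= W.
  move=> D v; have [vi [h [ri <-]]] := Hreps v.
  rewrite F_act (pmod_mask _ _ _ Hact0) Hd0e; last by apply: finsupp_mask.
  apply: le_trans (le_sum_In Wi0 ri).
  exact: mask_bound Ld0 (undup_uniq _) (supp_undup (fF vi)).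
pose T := fun (k : nat) f => d0 (mask (B k) f).
have key : forall N v, `|\sum_(k < N) T k (F v)| <= W.
  move=> N v; apply: (one_nonzero (a := fun k => T k (F v))) => //.
    by move=> k; apply: Tbound.
  move=> k k' kk'.
  case: (classic (exists u, F v u != 0 /\ B k u)) => [[u [Fu Bu]]|Hn].
    right; rewrite /T.
    have -> : mask (B k') (F v) = (fun _ => 0).
      apply: functional_extensionality => w; rewrite /mask.
      case: excluded_middle_informative => [//|nB].
      apply/eqP; apply: contraT => Fw; case: nB.
      apply: (ball_mono (m := k.+1)) => //=; right; exists u; split=> //; by exists v; split.
    exact: (lin0 Ld0).
  left; rewrite /T.
  have -> : mask (B k) (F v) = F v.
    apply: functional_extensionality => w; rewrite /mask.
    case: excluded_middle_informative => [Bw|//].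
    apply/esym/eqP; apply: contraT => Fw; case: Hn; by exists w.
  exact: d0F.
set r := W * (2 * C + 1) / `|c|.
have r0 : 0 <= r by rewrite divr_ge0 // mulr_ge0 //; lra.
pose N := Num.bound r.
have hN : r < N%:R := archi_boundP r0.
have [g Hg] := Hfar N.
pose x := fun w => delta w0 w + (-1) * delta (act0 g w0) w.
have fx : finsupp x by apply: finsupp_add; [apply: finsupp_delta|apply: finsupp_scale; apply: finsupp_delta].
have dgc : d0 (delta (act0 g w0)) = c.
  by rewrite (delta_act _ _ Hact0) Hd0e //; apply: finsupp_delta.
have dx0 : d0 x = 0.
  rewrite /x Hd0a ?Hd0s ?dgc; try by [apply: finsupp_delta|apply: finsupp_scale; apply: finsupp_delta].
  by rewrite mulN1r subrr.
have [y [fy Hy Hly]] := Hiso x fx dx0 1 ltr01.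
have lx : l1norm x <= 2 by apply: l1_two.
pose Phi := fun f => \sum_(k < N) T k f.
have LPhi : linear_on Phi := @lin_sum _ N _ (fun k => lin_mask (B k) Ld0).
have LPd1 : linear_on (fun y => Phi (d1 y)) := lin_comp Hd1f Hd1a Hd1s LPhi.
have E1 : Phi x = N%:R * (- c).
  rewrite /Phi; transitivity (\sum_(k < N) (- c)); last by rewrite sumr_const card_ord mulr_natl.
  apply: eq_bigr => k _; rewrite /T.
  have -> : mask (B k) x = (fun w => (-1) * delta (act0 g w0) w).
    apply: functional_extensionality => w; rewrite /mask /x /delta.
    case: excluded_middle_informative => [Bw|nBw].
      case: (w =P act0 g w0) => [Ew|_]; last by rewrite mulr0.
      by case: Hg; apply: (ball_mono (m := k)) (ltnW (ltn_ord k)) _; rewrite -Ew.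
    case: (w =P w0) => [Ew|_]; last by rewrite add0r.
    by case: nBw; rewrite Ew; apply: (ball_mono (m := 0)).
  by rewrite Hd0s ?dgc ?mulN1r //; apply: finsupp_delta.
have E2 : Phi x = \sum_(v <- undup (supp_seq y)) y v * Phi (F v).
  have -> : x = d1 y by apply: functional_extensionality => w; rewrite Hy.
  by move: (decomp LPd1 (undup_uniq _) (supp_undup fy)) => /= ->.
have A2 : N%:R * `|c| <= W * l1norm y.
  have -> : N%:R * `|c| = `|Phi x| by rewrite E1 normrM normr_nat normrN.
  rewrite E2 /l1norm mulr_sumr.
  apply: le_trans (ler_norm_sum _ _ _) _; apply: ler_sum => v _.
  by rewrite normrM mulrC ler_wpM2r // key.
have cpos : 0 < `|c| by rewrite normr_gt0.
have A1 : W * (2 * C + 1) < N%:R * `|c|.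
  have : r * `|c| < N%:R * `|c| by rewrite ltr_pM2r.
  by rewrite /r divfK // normr_eq0.
have A3 : W * l1norm y <= W * (2 * C + 1).
  apply: ler_wpM2l => //; apply: le_trans Hly _.
  have : C * l1norm x <= C * 2 by rewrite ler_wpM2l // ltW.
  lra.
lra.
Qed.

Lemma easy_dir (G : TopGroup) : compact_group G -> compactly_generated G /\ weak_lin_isoperimetric G.
Proof.
move=> HC; split.
  exists (fun _ => True); split=> // g; exists (g :: nil); split; first by move=> *; left.
  by rewrite /gprod /= tg_mulg1.
pose act := fun (_ : G) (w : unit) => w.
have Hact : is_action act by [].
have Hprop : proper_Gset act.
  split=> // w; have -> : stabilizer act w = (fun _ => True).
    by apply: functional_extensionality => g; apply: propositional_extensionality.
  by split; [apply: tg_open_setT|].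
have Hfin : finitely_many_orbits act.
  by exists (tt :: nil) => w; exists tt, (tg_one G); split; [left|case: w].
exists unit, unit, act, act, (fun _ _ => 0), (fun x => x tt); split.
  split=> //.
  - split.
    + by move=> *; apply: finsupp0.
    + by move=> * /=; rewrite addr0.
    + by move=> * /=; rewrite mulr0.
    + by [].
  - split.
    + by move=> q; exists (fun _ => q); split=> //; exists (tt :: nil) => -[]; rewrite mem_seq1.
    + by [].
    + by move=> x _ H; exists (fun _ => 0); split; [apply: finsupp0|case; rewrite H].
exists 1; split=> // x _ Hx eps He; exists (fun _ => 0); split.
- exact: finsupp0.
- by case; rewrite Hx.
- have h1 : 0 <= l1norm x by apply: sumr_ge0.
  have -> : l1norm (fun _ : unit => 0 : rat) = 0 by rewrite /l1norm big1 // => *; rewrite normr0.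
  lra.
Qed.

Theorem proposition4p7 (G : TopGroup) (HG : TDLC G) :
  compact_group G <-> (compactly_generated G /\ weak_lin_isoperimetric G).
Proof.
split; first exact: easy_dir.
case=> _ [Om1 [Om0 [act1 [act0 [d1 [d0 [HR [C [C0 Hiso]]]]]]]]].
exact: hard_dir HR C0 Hiso.
Qed.
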